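(* For $\theta\in\mathbb{R}$ and $u\in\{0,1\}$ let $$\mathcal{H}^\theta_u=\frac{1}{\sqrt{2}}\begin{bmatrix}1 & 1\\ (-1)^u e^{i\theta} & (-1)^{u+1}e^{i\theta}\end{bmatrix}.$$ Then for all $\theta\in\mathbb{R}$ and all $u,v\in\{0,1\}$, $\mathcal{H}^\theta_u\lvert v\rangle=\mathcal{H}^\theta_v\lvert u\rangle$. Moreover, the one-qubit scheme $\Xi=(\mathcal{QE},\mathcal{QD})$ is correct: for every secret bit $s$, every angle $\theta$ and every message bit $b$, $\mathcal{QD}_{s,\theta}(\mathcal{QE}_{s,\theta}(b))=b$ with probability $1$.
   Context: $\{\lvert 0\rangle,\lvert 1\rangle\}$ is the computational basis. The scheme $\Xi=(\mathcal{QE},\mathcal{QD})$, with secret bit $s\in\{0,1\}$ and equatorial angle $\theta$, is defined as follows. $\mathcal{QE}_{s,\theta}(b)$, for a message bit $b\in\{0,1\}$: prepare $\lvert s\rangle$ and $\lvert b\rangle$, sample a uniformly random bit $r\in\{0,1\}$, and output the pair of qubits $(\lvert c_0\rangle,\lvert c_1\rangle)=(\mathcal{H}^\theta_r\lvert s\rangle,\mathcal{H}^\theta_r\lvert b\rangle)$. $\mathcal{QD}_{s,\theta}(\lvert c_0\rangle,\lvert c_1\rangle)$: apply $(\mathcal{H}^\theta_s)^\dagger$ to $\lvert c_0\rangle$ and measure in the computational basis to obtain a bit $r$; then apply $(\mathcal{H}^\theta_r)^\dagger$ to $\lvert c_1\rangle$, measure in the computational basis to obtain a bit, and output it. *)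

(* Defs.v *)
From HB Require Import structures.
From mathcomp Require Import all_boot all_order all_algebra.
From mathcomp Require Import all_classical all_reals.
From mathcomp Require Import trigo.
From mathcomp Require Import complex.
Set Implicit Arguments. Unset Strict Implicit. Unset Printing Implicit Defensive.
Import Order.TTheory GRing.Theory Num.Theory.
Local Open Scope ring_scope.
Local Open Scope complex_scope.

Section QDefs.
Variable R : realType.
Local Notation C := (complex R).

Definition bidx (u : bool) : 'I_2 := inord u.

Definition ket (u : bool) : 'cV[C]_2 := delta_mx (bidx u) 0.

Definition expi (theta : R) : C := (cos theta) +i* (sin theta).

Definition Hmat (theta : R) (u : bool) : 'M[C]_2 :=
  \matrix_(i < 2, j < 2)
    (((Num.sqrt (2 : R))^-1)%:C *
     (if i == 0 :> nat then 1
      else (-1) ^+ (u + j)%N * expi theta)).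

Definition adj (A : 'M[C]_2) : 'M[C]_2 := (map_mx Num.conj A)^T.

(* Born rule: probability of outcome k when measuring the (normalised) qubit
   state psi in the computational basis *)
Definition born (psi : 'cV[C]_2) (k : bool) : R := (Normc.normc (psi (bidx k) 0)) ^+ 2.

(* QE_{s,theta}(b): with probability 1/2 for each r, outputs the product state
   (H_r |s>, H_r |b>).
   QD_{s,theta}: apply (H_s)^dagger to c0, measure -> r'; apply (H_{r'})^dagger to
   c1, measure -> output bit.
   Since the ciphertext is a product state, the measurement on c1 is independent of
   that on c0 given r. *)
Definition QE_state (s theta : _) (b r : bool) : 'cV[C]_2 * 'cV[C]_2 :=
  (Hmat theta r *m ket s, Hmat theta r *m ket b).

Definition QD_prob (s : bool) (theta : R) (c : 'cV[C]_2 * 'cV[C]_2) (b' : bool) : R :=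
  \sum_(r' : bool)
     born (adj (Hmat theta s) *m c.1) r' * born (adj (Hmat theta r') *m c.2) b'.

Definition QDQE_prob (s : bool) (theta : R) (b b' : bool) : R :=
  \sum_(r : bool) (1/2) * QD_prob s theta (QE_state s theta b r) b'.

End QDefs.

(* Main.v *)
Require Import Defs.
From HB Require Import structures.
From mathcomp Require Import all_boot all_order all_algebra.
From mathcomp Require Import all_classical all_reals.
From mathcomp Require Import trigo.
From mathcomp Require Import complex.
From mathcomp Require Import ring lra.
Import Order.TTheory GRing.Theory Num.Theory.
Local Open Scope ring_scope.
Local Open Scope complex_scope.
Section S.
Variable R : realType.
Lemma bidxE (k : bool) : nat_of_ord (bidx k) = k.
Proof. by rewrite /bidx inordK //; case: k. Qed.
Lemma Hket t r v i : (Hmat t r *m ket R v) i 0 = Hmat t r i (bidx v).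
Proof. by rewrite /ket -colE mxE. Qed.
Lemma conjE (x : complex R) : Num.conj x = conjc x.
Proof. by []. Qed.
Lemma expiJ (t : R) : conjc (expi t) * expi t = 1.
Proof.
rewrite /expi /=; apply/eqP; rewrite eq_complex /=; apply/andP; split; apply/eqP.

- rewrite -(cos2Dsin2 t); ring.
- ring.
Qed.
Lemma key (t : R) (s r v k : bool) :
  (adj (Hmat t s) *m (Hmat t r *m ket R v)) (bidx k) 0 = if k == (s (+) r (+) v) then 1 else 0.
Proof.
rewrite !mxE !big_ord_recl big_ord0 !Hket !mxE !bidxE /=.
rewrite !rmorphM /= rmorphXn rmorphN1 !conjE !conjc_real.
set c := ((Num.sqrt 2)^-1)%:C.
have Hc : c * c = 2^-1.
  rewrite /c -rmorphM /= -invfM -expr2 sqr_sqrtr ?ler0n //.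
  by rewrite rmorphV ?unitfE ?pnatr_eq0 //= rmorph_nat.
have -> : c * 1 * (c * 1) + (c * ((-1) ^+ (s + k) * (expi t)^*%C) * (c * ((-1) ^+ (r + v) * expi t)) + 0)
  = c * c * (1 + (-1) ^+ (s + k) * (-1) ^+ (r + v) * ((expi t)^*%C * expi t)) by ring.
rewrite Hc expiJ.
have h2 : (2 : complex R) != 0 by rewrite pnatr_eq0.
by case: s; case: r; case: v; case: k => /=; field.
Qed.


Lemma bornK (t : R) (s r v k : bool) :
  born (adj (Hmat t s) *m (Hmat t r *m ket R v)) k = if k == (s (+) r (+) v) then 1 else 0.
Proof.
rewrite /born key; case: ifP => _; first by rewrite Normc.normc1 expr1n.
by rewrite Normc.normc0 expr0n.
Qed.
End S.

Theorem theorem1 (R : realType) :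
  (forall (theta : R) (u v : bool),
      Hmat theta u *m ket R v = Hmat theta v *m ket R u) /\
  (forall (s : bool) (theta : R) (b : bool), QDQE_prob s theta b b = 1).
Proof.
split.
  move=> t u v; apply/matrixP => i j; rewrite (ord1 j) !Hket !mxE !bidxE.
  by rewrite addnC.
move=> s t b; rewrite /QDQE_prob /QD_prob /QE_state /=.
under eq_bigr do under eq_bigr do rewrite !bornK.
rewrite !big_bool /=.
by case: s; case: b => /=; lra.
Qed.
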